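(* Let $F$ be defined by the formula $F(x)=\beta_{i_1,1}+\sum_{k=2}^{\infty}\Big[\tilde\beta_{i_k,k}\prod_{j=1}^{k-1}\tilde p_{i_j,j}\Big]$ for $x=\Delta^{-\tilde Q}_{i_1i_2\dots i_n\dots}\in[0,1]$. Then $F$ is correctly defined at every point of $[0,1]$: for every nega-$\tilde Q$-representation of $x$ the series converges, and for every nega-$\tilde Q$-rational $x$ its two different nega-$\tilde Q$-representations give the same value of the series.
   Context: Let $(m_n)_{n\ge1}$ be a sequence of finite nonnegative integers and $\tilde Q=\|q_{i,n}\|$ ($n\in\mathbb N$, $i\in\{0,1,\dots,m_n\}$) a matrix with $q_{i,n}>0$, $\sum_{i=0}^{m_n}q_{i,n}=1$ for all $n$, and $\prod_{n=1}^\infty q_{i_n,n}=0$ for every sequence $(i_n)$ with $i_n\in\{0,\dots,m_n\}$. Put $a_{0,n}=0$, $a_{i,n}=\sum_{l=0}^{i-1}q_{l,n}$ for $i\ge1$, and for digit sequences $\Delta^{\tilde Q}_{j_1j_2\dots}=a_{j_1,1}+\sum_{n\ge2}a_{j_n,n}\prod_{l=1}^{n-1}q_{j_l,l}$. For odd $n$ set $\tilde q_{i,n}=q_{i,n}$, $\tilde a_{i,n}=a_{i,n}$; for even $n$ set $\tilde q_{i,n}=q_{m_n-i,n}$, $\tilde a_{i,n}=a_{m_n-i,n}$. The nega-$\tilde Q$-representation $x=\Delta^{-\tilde Q}_{i_1i_2\dots}$ ($i_n\in\{0,\dots,m_n\}$) means $x=\Delta^{\tilde Q}_{i_1[m_2-i_2]i_3[m_4-i_4]\dots}=a_{i_1,1}+\sum_{n\ge2}\tilde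 a_{i_n,n}\prod_{j=1}^{n-1}\tilde q_{i_j,j}$. Every $x\in[0,1]$ has such a representation; the numbers $\Delta^{-\tilde Q}_{i_1\dots i_{n-1}i_nm_{n+1}0m_{n+3}0m_{n+5}\dots}=\Delta^{-\tilde Q}_{i_1\dots i_{n-1}[i_n-1]0m_{n+2}0m_{n+4}\dots}$ ($i_n\neq0$) have exactly two representations and are called nega-$\tilde Q$-rational; the others have one and are called nega-$\tilde Q$-irrational. Let $P=\|p_{i,n}\|$ be a matrix of the same shape with $p_{i,n}\in(-1,1)$, $\sum_{i=0}^{m_n}p_{i,n}=1$ for all $n$, $\prod_{n=1}^\infty|p_{i_n,n}|=0$ for every digit sequence $(i_n)$, and $0<\sum_{i=0}^{c-1}p_{i,n}<1$ for all $n$ and $c\in\{1,\dots,m_n\}$. Put $\beta_{0,n}=0$, $\beta_{c,n}=\sum_{i=0}^{c-1}p_{i,n}$ for $c\ge1$; for odd $n$ let $\tilde p_{i,n}=p_{i,n}$, $\tilde\beta_{i,n}=\beta_{i,n}$, for even $n$ let $\tilde p_{i,n}=p_{m_n-i,n}$, $\tilde\beta_{i,n}=\beta_{m_n-i,n}$. *)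

(* Defs.v *)
From Stdlib Require Import Reals.
From Coquelicot Require Import Coquelicot.
Open Scope R_scope.

(* Matrices are functions  (i : nat) -> (n : nat) -> R ; column index n >= 1. *)

Fixpoint prod_to (f : nat -> R) (N : nat) : R :=
  match N with
  | O => 1
  | S k => prod_to f k * f (S k)
  end.

Fixpoint sum_lt (f : nat -> R) (c : nat) : R :=
  match c with
  | O => 0
  | S k => sum_lt f k + f k
  end.

(* a_{i,n} = sum_{l=0}^{i-1} q_{l,n}  (so a_{0,n} = 0); same for beta *)
Definition acc (q : nat -> nat -> R) (i n : nat) : R := sum_lt (fun l => q l n) i.

Definition tld (m : nat -> nat) (f : nat -> nat -> R) (i n : nat) : R :=
  if Nat.odd n then f i n else f (m n - i)%nat n.

(* admissible digit sequences: i_n in {0,...,m_n} for n >= 1 (i 0 unused) *)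
Definition digit_seq (m : nat -> nat) (d : nat -> nat) : Prop :=
  forall n, (1 <= n)%nat -> (d n <= m n)%nat.

(* k-th term (k >= 1) of the series
     tilde_a_{d_k,k} * prod_{j=1}^{k-1} tilde_q_{d_j,j}
   for a matrix q; with q := Q this is the nega-Q-tilde representation
   (tilde_a_{i,1} = a_{i,1}), with q := P it is the series defining F. *)
Definition nega_term (m : nat -> nat) (q : nat -> nat -> R) (d : nat -> nat) (k : nat) : R :=
  tld m (acc q) (d k) k * prod_to (fun j => tld m q (d j) j) (k - 1)%nat.

(* series  sum_{k>=1} nega_term ... k, reindexed from 0 for Coquelicot *)
Definition nega_series (m : nat -> nat) (q : nat -> nat -> R) (d : nat -> nat) : nat -> R :=
  fun n => nega_term m q d (S n).

Definition Q_matrix (m : nat -> nat) (q : nat -> nat -> R) : Prop :=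
  (forall n i, (1 <= n)%nat -> (i <= m n)%nat -> 0 < q i n) /\
  (forall n, (1 <= n)%nat -> sum_lt (fun i => q i n) (S (m n)) = 1) /\
  (forall d, digit_seq m d ->
     is_lim_seq (fun N => prod_to (fun n => q (d n) n) N) 0).

Definition P_matrix (m : nat -> nat) (p : nat -> nat -> R) : Prop :=
  (forall n i, (1 <= n)%nat -> (i <= m n)%nat -> -1 < p i n < 1) /\
  (forall n, (1 <= n)%nat -> sum_lt (fun i => p i n) (S (m n)) = 1) /\
  (forall d, digit_seq m d ->
     is_lim_seq (fun N => prod_to (fun n => Rabs (p (d n) n)) N) 0) /\
  (forall n c, (1 <= n)%nat -> (1 <= c)%nat -> (c <= m n)%nat ->
     0 < sum_lt (fun i => p i n) c < 1).

(* Main.v *)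
Require Import Defs.
From Stdlib Require Import Reals Lra Lia Psatz Classical.
From Coquelicot Require Import Coquelicot.
Open Scope R_scope.

Definition pt (r : nat -> nat -> R) (d : nat -> nat) (k : nat) : R :=
  acc r (d k) k * prod_to (fun j => r (d j) j) (k - 1).
Definition PP (r : nat -> nat -> R) (d : nat -> nat) (N : nat) : R :=
  prod_to (fun j => r (d j) j) N.
Fixpoint PS (r : nat -> nat -> R) (d : nat -> nat) (N : nat) : R :=
  match N with O => 0 | S k => PS r d k + pt r d (S k) end.
Definition tdig (m : nat -> nat) (d : nat -> nat) (k : nat) : nat :=
  if Nat.odd k then d k else (m k - d k)%nat.

Lemma PS_S r d N : PS r d (S N) = PS r d N + acc r (d (S N)) (S N) * PP r d N.
Proof. simpl PS at 1. unfold pt, PP. replace (S N - 1)%nat with N by lia. reflexivity. Qed.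

Lemma PP_S r d N : PP r d (S N) = PP r d N * r (d (S N)) (S N).
Proof. reflexivity. Qed.

Lemma acc_S r c k : acc r (S c) k = acc r c k + r c k.
Proof. reflexivity. Qed.

Lemma prod_to_ext f g N : (forall j, f j = g j) -> prod_to f N = prod_to g N.
Proof. intros H; induction N; simpl; [reflexivity| rewrite IHN, H; reflexivity]. Qed.

Lemma nega_term_pt m r d k : nega_term m r d k = pt r (tdig m d) k.
Proof.
  unfold nega_term, pt, tdig, tld. f_equal.
  - destruct (Nat.odd k); reflexivity.
  - apply prod_to_ext; intro j; destruct (Nat.odd j); reflexivity.
Qed.

Lemma sum_n_PS r d N : sum_n (fun n => pt r d (S n)) N = PS r d (S N).
Proof.
  induction N.
  - rewrite sum_O. simpl. ring.
  - unfold sum_n in *. rewrite sum_n_Sm by lia. rewrite IHN. reflexivity.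
Qed.

Lemma digit_tdig m d : digit_seq m d -> digit_seq m (tdig m d).
Proof. unfold digit_seq, tdig; intros H n Hn; destruct (Nat.odd n); [apply H; auto| lia]. Qed.

Lemma Rabs_prod f N : Rabs (prod_to f N) = prod_to (fun j => Rabs (f j)) N.
Proof. induction N; simpl; [apply Rabs_R1| rewrite Rabs_mult, IHN; reflexivity]. Qed.

Lemma segment r d n :
  (forall k, (n < k)%nat -> 0 <= acc r (d k) k <= 1 /\ 0 <= acc r (d k) k + r (d k) k <= 1) ->
  forall N, (n <= N)%nat -> exists t u, 0 <= t <= 1 /\ 0 <= u <= 1 /\
     PS r d N = PS r d n + t * PP r d n /\ PS r d N + PP r d N = PS r d n + u * PP r d n.
Proof.
  intros Hc N HN. replace N with (n + (N - n))%nat by lia.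
  generalize (N - n)%nat as j. intro j. induction j.
  - exists 0, 1. rewrite Nat.add_0_r. repeat split; lra.
  - destruct IHj as [t [u [Ht [Hu [E1 E2]]]]].
    replace (n + S j)%nat with (S (n + j)) by lia.
    destruct (Hc (S (n+j)) ltac:(lia)) as [Hb Hbp].
    set (b := acc r (d (S (n + j))) (S (n + j))) in *.
    set (pp := r (d (S (n + j))) (S (n + j))) in *.
    assert (EP : PP r d (n+j) = (u - t) * PP r d n) by lra.
    exists (t + b * (u - t)), (t + (b + pp) * (u - t)).
    rewrite PS_S, PP_S. fold b pp.
    repeat split; try nra; rewrite E1, EP; ring.
Qed.

Lemma segment_abs r d n :
  (forall k, (n < k)%nat -> 0 <= acc r (d k) k <= 1 /\ 0 <= acc r (d k) k + r (d k) k <= 1) ->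
  forall N, (n <= N)%nat -> Rabs (PS r d N - PS r d n) <= Rabs (PP r d n).
Proof.
  intros Hc N HN. destruct (segment r d n Hc N HN) as [t [u [Ht [Hu [E1 E2]]]]].
  rewrite E1. replace (PS r d n + t * PP r d n - PS r d n) with (t * PP r d n) by ring.
  rewrite Rabs_mult, (Rabs_right t) by lra. pose proof (Rabs_pos (PP r d n)). nra.
Qed.

Lemma conv_of_segment r d :
  (forall k, (0 < k)%nat -> 0 <= acc r (d k) k <= 1 /\ 0 <= acc r (d k) k + r (d k) k <= 1) ->
  is_lim_seq (PP r d) 0 -> ex_finite_lim_seq (PS r d).
Proof.
  intros Hc HP. apply ex_lim_seq_cauchy_corr. intro eps.
  apply is_lim_seq_abs_0 in HP.
  apply is_lim_seq_spec in HP. destruct (HP (pos_div_2 eps)) as [N HN].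
  exists N. intros a b Ha Hb.
  assert (Hc' : forall k, (N < k)%nat -> 0 <= acc r (d k) k <= 1 /\ 0 <= acc r (d k) k + r (d k) k <= 1)
    by (intros; apply Hc; lia).
  pose proof (segment_abs r d N Hc' a Ha). pose proof (segment_abs r d N Hc' b Hb).
  specialize (HN N (le_n N)). simpl in HN. rewrite Rminus_0_r, Rabs_Rabsolu in HN.
  replace (PS r d a - PS r d b) with ((PS r d a - PS r d N) - (PS r d b - PS r d N)) by ring.
  eapply Rle_lt_trans. apply Rabs_triang. rewrite Rabs_Ropp. simpl in *. lra.
Qed.

Lemma acc_mono (m : nat -> nat) q k c c' :
  (forall i, (i <= m k)%nat -> 0 < q i k) -> (c <= c')%nat -> (c' <= S (m k))%nat ->
  acc q c k <= acc q c' k.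
Proof.
  intros Hq Hc Hc'. replace c' with (c + (c' - c))%nat by lia.
  assert (Hj : (c + (c' - c) <= S (m k))%nat) by lia. revert Hj.
  generalize (c' - c)%nat as j. intro j. induction j; intro Hj.
  - rewrite Nat.add_0_r; lra.
  - replace (c + S j)%nat with (S (c + j)) by lia. rewrite acc_S.
    specialize (IHj ltac:(lia)). specialize (Hq (c + j)%nat ltac:(lia)). lra.
Qed.

Lemma acc0 q k : acc q 0 k = 0. Proof. reflexivity. Qed.

Lemma colQ m q d : Q_matrix m q -> digit_seq m d ->
  forall k, (0 < k)%nat -> 0 <= acc q (d k) k <= 1 /\ 0 <= acc q (d k) k + q (d k) k <= 1.
Proof.
  intros [H1 [H2 _]] Hd k Hk.
  assert (Hq : forall i, (i <= m k)%nat -> 0 < q i k) by (intros; apply H1; lia).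
  pose proof (Hd k ltac:(lia)).
  pose proof (acc_mono m q k 0 (d k) Hq ltac:(lia) ltac:(lia)).
  pose proof (acc_mono m q k (S (d k)) (S (m k)) Hq ltac:(lia) ltac:(lia)).
  pose proof (Hq (d k) H).
  rewrite acc0 in H0. rewrite acc_S in H3. unfold acc in H3 at 2. rewrite H2 in H3 by lia.
  lra.
Qed.

Lemma colP m p d : P_matrix m p -> digit_seq m d ->
  forall k, (0 < k)%nat -> 0 <= acc p (d k) k <= 1 /\ 0 <= acc p (d k) k + p (d k) k <= 1.
Proof.
  intros [_ [H2 [_ H4]]] Hd k Hk. pose proof (Hd k ltac:(lia)).
  rewrite <- acc_S. split.
  - destruct (d k) eqn:E. rewrite acc0; lra.
    pose proof (H4 k (S n) ltac:(lia) ltac:(lia) ltac:(lia)). unfold acc. lra.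
  - destruct (Nat.eq_dec (d k) (m k)) as [E|E].
    + rewrite E. unfold acc. rewrite H2 by lia. lra.
    + pose proof (H4 k (S (d k)) ltac:(lia) ltac:(lia) ltac:(lia)). unfold acc. lra.
Qed.

Lemma PPlim m p d : P_matrix m p -> digit_seq m d -> is_lim_seq (PP p d) 0.
Proof.
  intros HP Hd. destruct HP as [_ [_ [H3 _]]]. apply is_lim_seq_abs_0.
  eapply is_lim_seq_ext; [| apply (H3 d Hd)].
  intro n. unfold PP. rewrite Rabs_prod. reflexivity.
Qed.

Lemma PPlimQ m q d : Q_matrix m q -> digit_seq m d -> is_lim_seq (PP q d) 0.
Proof. intros [_ [_ H3]] Hd. apply (H3 d Hd). Qed.

Lemma PPpos m q d : Q_matrix m q -> digit_seq m d -> forall N, 0 < PP q d N.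
Proof.
  intros [H1 _] Hd N. induction N; unfold PP in *; simpl. lra.
  apply Rmult_lt_0_compat; auto. apply H1; auto. lia. apply Hd; lia.
Qed.

Lemma convP m p d : P_matrix m p -> digit_seq m d -> ex_finite_lim_seq (PS p d).
Proof.
  intros HP Hd. apply conv_of_segment. apply (colP m p d HP Hd). apply (PPlim m p d HP Hd).
Qed.

Lemma q_bounds m q d (x : R) : Q_matrix m q -> digit_seq m d -> is_lim_seq (PS q d) x ->
  forall N, PS q d N <= x <= PS q d N + PP q d N.
Proof.
  intros HQ Hd Hx N.
  assert (Hc : forall k, (N < k)%nat -> 0 <= acc q (d k) k <= 1 /\ 0 <= acc q (d k) k + q (d k) k <= 1)
    by (intros; apply (colQ m q d HQ Hd); lia).
  pose proof (PPpos m q d HQ Hd N).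
  apply (is_lim_seq_incr_n _ N) in Hx.
  assert (B : forall j, PS q d N <= PS q d (j + N) <= PS q d N + PP q d N).
  { intro j. destruct (segment q d N Hc (j + N) ltac:(lia)) as [t [u [Ht [Hu [E1 E2]]]]].
    rewrite E1. nra. }
  split.
  - pose proof (is_lim_seq_le (fun _ => PS q d N) (fun j => PS q d (j + N)) (PS q d N) x
      (fun j => proj1 (B j)) (is_lim_seq_const _) Hx). exact H0.
  - pose proof (is_lim_seq_le (fun j => PS q d (j + N)) (fun _ => PS q d N + PP q d N) x _
      (fun j => proj2 (B j)) Hx (is_lim_seq_const _)). exact H0.
Qed.

Lemma prefix_eq r D E n0 : (forall k, (1 <= k <= n0)%nat -> D k = E k) ->
  forall j, (j <= n0)%nat -> PS r D j = PS r E j /\ PP r D j = PP r E j.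
Proof.
  intros H j. induction j; intro Hj.
  - split; reflexivity.
  - destruct (IHj ltac:(lia)) as [A B]. rewrite !PS_S, !PP_S, A, B, (H (S j)) by lia.
    split; reflexivity.
Qed.

Lemma key m q p D E (x : R) n0 : Q_matrix m q -> P_matrix m p ->
  digit_seq m D -> digit_seq m E -> is_lim_seq (PS q D) x -> is_lim_seq (PS q E) x ->
  (forall k, (1 <= k <= n0)%nat -> D k = E k) -> (D (S n0) < E (S n0))%nat ->
  exists y : R, is_lim_seq (PS p D) y /\ is_lim_seq (PS p E) y.
Proof.
  intros HQ HP HD HE HxD HxE Hpre Hlt.
  assert (Hq : forall k i, (1 <= k)%nat -> (i <= m k)%nat -> 0 < q i k) by apply HQ.
  assert (Hsum : forall k, (1 <= k)%nat -> acc q (S (m k)) k = 1) by (intros; apply HQ; auto).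
  assert (HsumP : forall k, (1 <= k)%nat -> acc p (S (m k)) k = 1) by (intros; apply HP; auto).
  set (n := S n0) in *.
  set (c := D n) in *.
  assert (HEn : (E n <= m n)%nat) by (apply HE; unfold n; lia).
  destruct (prefix_eq q D E n0 Hpre n0 (le_n _)) as [Sq Pq].
  destruct (prefix_eq p D E n0 Hpre n0 (le_n _)) as [Sp Pp].
  pose proof (q_bounds m q D x HQ HD HxD n) as bD.
  pose proof (q_bounds m q E x HQ HE HxE n) as bE.
  unfold n in bD, bE. rewrite PS_S, PP_S in bD. rewrite PS_S in bE.
  fold n c in bD, bE. pose proof (acc_S q c n) as AcS.
  pose proof (PPpos m q D HQ HD n0) as Hpi.
  assert (Hqn : forall i, (i <= m n)%nat -> 0 < q i n) by (intros; apply Hq; [unfold n; lia| assumption]).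
  assert (Hmono : acc q (S c) n <= acc q (E n) n).
  { apply (acc_mono m); auto; lia. }
  rewrite Sq, Pq in *.
  assert (HEn' : E n = S c).
  { destruct (Nat.eq_dec (E n) (S c)) as [e|ne]; auto. exfalso.
    assert (acc q (S (S c)) n <= acc q (E n) n).
    { apply (acc_mono m); auto; lia. }
    rewrite acc_S in H. pose proof (Hq n (S c) ltac:(unfold n; lia) ltac:(lia)). nra. }
  assert (Hx1 : x = PS q D n + PP q D n).
  { unfold n. rewrite PS_S, PP_S, Sq, Pq. fold n c. nra. }
  assert (Hx2 : x = PS q E n).
  { unfold n. rewrite PS_S. fold n. nra. }
  assert (TD : forall N, (n <= N)%nat -> PS q D N + PP q D N = x).
  { intros N HN.
    assert (Hc : forall k, (n < k)%nat -> 0 <= acc q (D k) k <= 1 /\ 0 <= acc q (D k) k + q (D k) k <= 1)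
      by (intros; apply (colQ m q D HQ HD); lia).
    destruct (segment q D n Hc N HN) as [t [u [Ht [Hu [E1 E2]]]]].
    pose proof (q_bounds m q D x HQ HD HxD N). pose proof (PPpos m q D HQ HD n). nra. }
  assert (TDm : forall N, (n <= N)%nat -> D (S N) = m (S N)).
  { intros N HN. pose proof (TD N HN). pose proof (TD (S N) ltac:(lia)).
    rewrite PS_S, PP_S in H0. pose proof (PPpos m q D HQ HD N).
    assert (A : acc q (S (D (S N))) (S N) = 1). { rewrite acc_S. nra. }
    pose proof (HD (S N) ltac:(lia)).
    destruct (Nat.eq_dec (D (S N)) (m (S N))) as [e|ne]; auto. exfalso.
    assert (acc q (S (D (S N))) (S N) <= acc q (m (S N)) (S N)).
    { apply (acc_mono m); [intros; apply Hq; lia| lia | lia]. }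
    pose proof (Hsum (S N) ltac:(lia)) as HS. rewrite acc_S in HS.
    pose proof (Hq (S N) (m (S N)) ltac:(lia) ltac:(lia)). lra. }
  assert (TE : forall N, (n <= N)%nat -> PS q E N = x).
  { intros N HN.
    assert (Hc : forall k, (n < k)%nat -> 0 <= acc q (E k) k <= 1 /\ 0 <= acc q (E k) k + q (E k) k <= 1)
      by (intros; apply (colQ m q E HQ HE); lia).
    destruct (segment q E n Hc N HN) as [t [u [Ht [Hu [E1 E2]]]]].
    pose proof (q_bounds m q E x HQ HE HxE N). pose proof (PPpos m q E HQ HE n). nra. }
  assert (TE0 : forall N, (n <= N)%nat -> E (S N) = 0%nat).
  { intros N HN. pose proof (TE N HN). pose proof (TE (S N) ltac:(lia)).
    rewrite PS_S in H0. pose proof (PPpos m q E HQ HE N).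
    assert (A : acc q (E (S N)) (S N) = 0) by nra.
    pose proof (HE (S N) ltac:(lia)).
    destruct (E (S N)) as [|k] eqn:Ek; auto. exfalso.
    assert (acc q 1 (S N) <= acc q (S k) (S N)).
    { apply (acc_mono m); [intros; apply Hq; lia| lia | lia]. }
    rewrite acc_S, acc0 in H3. pose proof (Hq (S N) 0%nat ltac:(lia) ltac:(lia)). lra. }
  set (y := PS p D n + PP p D n).
  exists y. split.
  - assert (PD : forall j, PS p D (j + n) = y - PP p D (j + n)).
    { intro j. induction j. rewrite Nat.add_0_l. unfold y. ring.
      replace (S j + n)%nat with (S (j + n)) by lia.
      rewrite PS_S, PP_S, (TDm (j+n)%nat) by lia.
      pose proof (HsumP (S (j + n)) ltac:(lia)). rewrite acc_S in H. rewrite IHj. nra. }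
    apply (is_lim_seq_incr_n _ n).
    eapply is_lim_seq_ext. intro j. symmetry. apply PD.
    replace (Finite y) with (Finite (y - 0)) by (f_equal; ring).
    apply is_lim_seq_minus'. apply is_lim_seq_const.
    apply (is_lim_seq_incr_n (PP p D) n 0). apply (PPlim m p D HP HD).
  - assert (Hy : y = PS p E n).
    { unfold y, n. rewrite !PS_S, PP_S, Sp, Pp. fold n c. rewrite HEn', acc_S. ring. }
    assert (PE : forall j, PS p E (j + n) = y).
    { intro j. induction j. rewrite Nat.add_0_l. auto.
      replace (S j + n)%nat with (S (j + n)) by lia.
      rewrite PS_S, (TE0 (j+n)%nat) by lia. rewrite acc0, IHj. ring. }
    apply (is_lim_seq_incr_n _ n).
    eapply is_lim_seq_ext. intro j. symmetry. apply PE. apply is_lim_seq_const.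
Qed.

Lemma series_iff m r d (l : R) :
  is_series (nega_series m r d) l <-> is_lim_seq (PS r (tdig m d)) l.
Proof.
  assert (E : forall N, sum_n (nega_series m r d) N = PS r (tdig m d) (S N)).
  { intro N. rewrite <- sum_n_PS. apply sum_n_ext. intro k. apply nega_term_pt. }
  split; intro H.
  - apply is_lim_seq_incr_1. eapply is_lim_seq_ext; [exact E| exact H].
  - apply is_lim_seq_incr_1 in H. change (is_lim_seq (sum_n (nega_series m r d)) l).
    eapply is_lim_seq_ext; [| exact H]. intro; symmetry; apply E.
Qed.

Lemma first_diff (D E : nat -> nat) :
  (forall k, (1 <= k)%nat -> D k = E k) \/
  exists n0, D (S n0) <> E (S n0) /\ forall k, (1 <= k <= n0)%nat -> D k = E k.
Proof.
  assert (aux : forall N, (forall k, (1 <= k <= N)%nat -> D k = E k) \/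
     exists n0, D (S n0) <> E (S n0) /\ forall k, (1 <= k <= n0)%nat -> D k = E k).
  { induction N.
    - left; intros; lia.
    - destruct IHN as [H|H]; [|right; exact H].
      destruct (Nat.eq_dec (D (S N)) (E (S N))) as [e|ne].
      + left. intros k Hk. destruct (Nat.eq_dec k (S N)); [subst; auto| apply H; lia].
      + right. exists N. split; auto. }
  destruct (classic (forall k, (1 <= k)%nat -> D k = E k)) as [H|H]; [left; exact H|].
  right. apply not_all_ex_not in H. destruct H as [k Hk].
  apply imply_to_and in Hk. destruct Hk as [Hk1 Hk2].
  destruct (aux k) as [A|A]; [exfalso; apply Hk2, A; lia| exact A].
Qed.

Lemma main2 m q p D E (x : R) : Q_matrix m q -> P_matrix m p ->
  digit_seq m D -> digit_seq m E -> is_lim_seq (PS q D) x -> is_lim_seq (PS q E) x ->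
  exists y : R, is_lim_seq (PS p D) y /\ is_lim_seq (PS p E) y.
Proof.
  intros HQ HP HD HE HxD HxE.
  destruct (first_diff D E) as [Heq | [n0 [Hne Hpre]]].
  - destruct (convP m p D HP HD) as [y Hy]. exists y. split; auto.
    eapply is_lim_seq_ext; [| exact Hy]. intro N.
    apply (prefix_eq p D E N); [intros; apply Heq; lia| lia].
  - destruct (Nat.lt_gt_cases (D (S n0)) (E (S n0))) as [[Hl|Hl] _]; [exact Hne| |].
    + exact (key m q p D E x n0 HQ HP HD HE HxD HxE Hpre Hl).
    + destruct (key m q p E D x n0 HQ HP HE HD HxE HxD) as [y [A B]].
      intros k Hk; symmetry; auto. exact Hl.
      exists y; auto.
Qed.

Theorem mainTheorem1 (m : nat -> nat) (q p : nat -> nat -> R)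
  (HQ : Q_matrix m q) (HP : P_matrix m p) :
  (forall d, digit_seq m d -> ex_series (nega_series m p d)) /\
  (forall d e (x : R), digit_seq m d -> digit_seq m e ->
     is_series (nega_series m q d) x -> is_series (nega_series m q e) x ->
     Series (nega_series m p d) = Series (nega_series m p e)).
Proof.
  split.
  - intros d Hd. destruct (convP m p (tdig m d) HP (digit_tdig m d Hd)) as [l Hl].
    exists l. apply series_iff. exact Hl.
  - intros d e x Hd He Hxd Hxe.
    apply series_iff in Hxd. apply series_iff in Hxe.
    destruct (main2 m q p _ _ x HQ HP (digit_tdig m d Hd) (digit_tdig m e He) Hxd Hxe)
      as [y [A B]].
    apply series_iff in A. apply series_iff in B.
    rewrite (is_series_unique _ _ A), (is_series_unique _ _ B). reflexivity.
Qed.
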